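(* Let $h>0$ and let $(\tau,\mu):\mathbb R\to\mathbb R^2$ be any solution of the system $\tau'=1+K(\tau,\mu)\mu$, $\mu'=-K(\tau,\mu)\tau$. Then $$\lim_{s\to+\infty}\tau(s)=+\infty,\quad \lim_{s\to-\infty}\tau(s)=-\infty,\quad \lim_{s\to+\infty}\mu(s)=-\infty,\quad \lim_{s\to-\infty}\mu(s)=+\infty.$$
   Context: Fix $h>0$. For $(\tau,\mu)\in\mathbb R^2$ put $r^2=\tau^2+\mu^2$ and define $K:\mathbb R^2\to\mathbb R$ by $$K(\tau,\mu)=\frac{2\big(\tau^2+h^2(1+\mu^2)\big)\tau+(h^2-1)(1+\mu^2)\mu}{(1+r^2)(h^2+r^2)}.$$ Consider the autonomous ODE system $\tau'=1+K(\tau,\mu)\mu$, $\mu'=-K(\tau,\mu)\tau$ for functions $s\mapsto(\tau(s),\mu(s))$; all its solutions are defined on $\mathbb R$. *)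

(* Defs.v *)
From Stdlib Require Import Reals.
From Coquelicot Require Import Coquelicot.
Open Scope R_scope.

Definition K (h tau mu : R) : R :=
  let r2 := tau ^ 2 + mu ^ 2 in
  (2 * (tau ^ 2 + h ^ 2 * (1 + mu ^ 2)) * tau + (h ^ 2 - 1) * (1 + mu ^ 2) * mu)
  / ((1 + r2) * (h ^ 2 + r2)).

(* Main.v *)
Require Import Defs.
From Stdlib Require Import Reals Lra Psatz Classical.
From Coquelicot Require Import Coquelicot.
Open Scope R_scope.

Definition Dn h t m := (1 + (t^2+m^2)) * (h^2 + (t^2+m^2)).
Definition Nn h t m := 2 * (t ^ 2 + h ^ 2 * (1 + m ^ 2)) * t + (h ^ 2 - 1) * (1 + m ^ 2) * m.

Lemma K_eq h t m : K h t m = Nn h t m / Dn h t m.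
Proof. reflexivity. Qed.

Lemma Dpos h t m : 0 < h -> 0 < Dn h t m.
Proof. intros. unfold Dn. apply Rmult_lt_0_compat; nra. Qed.

Lemma DK h t m : 0 < h -> Dn h t m * K h t m = Nn h t m.
Proof. intros. rewrite K_eq. field. apply Rgt_not_eq, Dpos; auto. Qed.

Lemma pos_by h t m X : 0 < h -> 0 < Dn h t m * X -> 0 < X.
Proof. intros. pose proof (Dpos h t m H). nra. Qed.

Lemma Pol1 h m : 0 < h -> 0 < 1 + K h 0 m * m.
Proof. intros. apply (pos_by h 0 m); auto.
  rewrite Rmult_plus_distr_l, <- Rmult_assoc, DK by auto. unfold Dn, Nn.
  replace ((1 + (0 ^ 2 + m ^ 2)) * (h ^ 2 + (0 ^ 2 + m ^ 2)) * 1 +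
   (2 * (0 ^ 2 + h ^ 2 * (1 + m ^ 2)) * 0 + (h ^ 2 - 1) * (1 + m ^ 2) * m) * m)
   with (h^2 * (1+m^2)^2) by ring. apply Rmult_lt_0_compat; nra. Qed.

Lemma Pol2 h t : 0 < h -> 0 < t -> 0 < K h t 0 * t.
Proof. intros. apply (pos_by h t 0); auto.
  rewrite <- Rmult_assoc, DK by auto. unfold Nn.
  replace ((2 * (t ^ 2 + h ^ 2 * (1 + 0 ^ 2)) * t + (h ^ 2 - 1) * (1 + 0 ^ 2) * 0) * t) with (2*(t^2+h^2)*(t*t)) by ring.
  apply Rmult_lt_0_compat; nra. Qed.

Lemma Pol3 h t M : 0 < h -> 0 < t -> 2 <= M -> 0 < M + K h t (-(M*t)) * (M*(-(M*t)) - t).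
Proof. intros. apply (pos_by h t (-(M*t))); auto.
  rewrite Rmult_plus_distr_l, <- Rmult_assoc, DK by auto. unfold Dn, Nn.
  match goal with |- 0 < ?X => replace X with
   ((1+M^2)*(M-2)*(1+h^2*M^2)*t^4 + 2*(1+M^2)*h^2*(M-1)*t^2 + M*h^2) by ring end.
  assert (0 <= (1+M^2)*(M-2)*(1+h^2*M^2)*t^4).
  { repeat apply Rmult_le_pos; try nra; apply pow_le; lra. }
  assert (0 <= 2*(1+M^2)*h^2*(M-1)*t^2). { repeat apply Rmult_le_pos; nra. }
  nra. Qed.
Lemma q1 t u : 0 <= u -> u <= t -> 0 <= 2*t^3 - 12/5*t^2*u + t*u^2 - 1/5*u^3.
Proof. intros. assert (0 <= t - u) by lra. 
 assert (E: 2*t^3 - 12/5*t^2*u + t*u^2 - 1/5*u^3 = (2*(t-u)^3 + 18/5*(t-u)^2*u + 11/5 * (t-u)*u^2 + 2/5*u^3)) by field.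
 rewrite E.
 assert (0 <= (t-u)^3) by (apply pow_le; lra). assert (0 <= (t-u)^2*u) by (apply Rmult_le_pos; nra).
 assert (0 <= (t-u)*u^2) by (apply Rmult_le_pos; nra). assert (0<= u^3) by (apply pow_le; lra). lra. Qed.
Lemma P5a t m : 2 <= t -> -t <= m -> m <= 0 ->
  6/5 * (1 + (t^2+m^2)) * (t^2+m^2) <= (t - m) * (2*t^3 - m - m^3).
Proof. intros. set (u := -m). assert (m = -u) by (unfold u; ring). rewrite H2.
  assert (0 <= u) by lra. assert (u <= t) by lra.
  pose proof (q1 t u H3 H4).
  assert (E: (t - - u) * (2*t^3 - - u - (-u)^3) - 6/5 * (1 + (t^2+(-u)^2)) * (t^2+(-u)^2)
     = 4/5*t^4 + u*(2*t^3 - 12/5*t^2*u + t*u^2 - 1/5*u^3) + t*u - 1/5*u^2 - 6/5*t^2) by field.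
  assert (0 <= u*(2*t^3 - 12/5*t^2*u + t*u^2 - 1/5*u^3)) by (apply Rmult_le_pos; lra).
  assert (u^2 <= t^2) by nra. assert (4 <= t^2) by nra. assert (0 <= t*u) by nra.
  assert (t^4 = t^2*t^2) by ring. nra. Qed.
Lemma P5b t m : 2 <= t -> -t <= m -> m <= 0 ->
  6/5 * (1 + (t^2+m^2)) <= (t - m) * ((1+m^2)*(2*t+m)).
Proof. intros. assert (2*t*t <= (t-m)*(2*t+m)) by nra. assert (0 <= m^2) by nra.
 assert ((1+m^2)*(2*t*t) <= (1+m^2)*((t-m)*(2*t+m))) by nra. assert (4 <= t^2) by nra. assert (4*m^2 <= m^2*t^2) by nra. nra. Qed.

Lemma Pol5 h t m : 0 < h -> 2 <= t -> -t <= m -> m <= 0 -> 1 + K h t m * (m - t) <= -1/5.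
Proof. intros. pose proof (Dpos h t m H) as HD.
  pose proof (P5a t m H0 H1 H2). pose proof (P5b t m H0 H1 H2).
  assert (Hk: Dn h t m * (1 + K h t m * (m - t)) <= Dn h t m * (-1/5)).
  { rewrite Rmult_plus_distr_l, <- Rmult_assoc, DK by auto.
    assert (E1: Dn h t m = (1 + (t^2+m^2)) * (t^2+m^2) + h^2 * (1 + (t^2+m^2))) by (unfold Dn; ring).
    assert (E2: Nn h t m = (2*t^3 - m - m^3) + h^2 * ((1+m^2)*(2*t+m))) by (unfold Nn; ring).
    rewrite E2. rewrite E1.
    assert (0 <= h^2) by nra. nra. }
  nra. Qed.

Lemma Pol6 h t m R0 : 0 < h -> t^2 + m^2 <= R0 -> t <= 0 ->
  - Rmin 1 (h^2 / (4 * (1+h^2) * (1+R0)^2)) <= t ->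
  h^2 / (2 * (1+R0) * (h^2+R0)) <= 1 + K h t m * m.
Proof. intros Hh HR Ht Hd. set (d := Rmin 1 (h^2 / (4 * (1+h^2) * (1+R0)^2))) in *.
  assert (HR0: 0 <= R0) by nra.
  assert (Hd1: d <= 1) by apply Rmin_l.
  assert (Hd2: d <= h^2 / (4 * (1+h^2) * (1+R0)^2)) by apply Rmin_r.
  assert (Hpos: 0 < 4 * (1+h^2) * (1+R0)^2) by (apply Rmult_lt_0_compat; nra).
  assert (Hd3: d * (4 * (1+h^2) * (1+R0)^2) <= h^2).
  { apply (Rmult_le_compat_r (4 * (1+h^2) * (1+R0)^2)) in Hd2; [|lra].
    replace (h ^ 2 / (4 * (1 + h ^ 2) * (1 + R0) ^ 2) * (4 * (1 + h ^ 2) * (1 + R0) ^ 2)) with (h^2) in Hd2 by (field; repeat split; nra). lra. }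
  pose proof (Dpos h t m Hh) as HD.
  assert (HDle: Dn h t m <= (1+R0)*(h^2+R0)) by (unfold Dn; apply Rmult_le_compat; nra).
  assert (Hat: Rabs t <= d) by (rewrite Rabs_left1; lra).
  assert (Ham: Rabs m <= 1 + R0).
  { destruct (Rle_dec 0 m); [rewrite Rabs_pos_eq| rewrite Rabs_left1]; nra. }
  assert (HQ: 0 <= t^2 + h^2*(1+m^2) <= (1+h^2)*(1+R0)) by nra.
  set (X := 2*t*m*(t^2 + h^2*(1+m^2))).
  assert (HX: Rabs X <= h^2/2).
  { unfold X. rewrite !Rabs_mult. rewrite (Rabs_pos_eq 2) by lra.
    rewrite (Rabs_pos_eq (t ^ 2 + h ^ 2 * (1 + m ^ 2))) by lra.
    assert (0 <= Rabs t) by apply Rabs_pos. assert (0 <= Rabs m) by apply Rabs_pos.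
    assert (Rabs t * Rabs m <= d * (1+R0)) by (apply Rmult_le_compat; lra).
    assert (Rabs t * Rabs m * (t ^ 2 + h ^ 2 * (1 + m ^ 2)) <= d * (1+R0) * ((1+h^2)*(1+R0)))
      by (apply Rmult_le_compat; nra).
    nra. }
  assert (HN: h^2/2 <= Dn h t m * (1 + K h t m * m)).
  { rewrite Rmult_plus_distr_l, <- Rmult_assoc, DK by auto.
    assert (E: Dn h t m * 1 + Nn h t m * m = h^2*(1+m^2)^2 + (1+h^2)*t^2 + 2*t^2*m^2 + t^4 + X)
      by (unfold X, Dn, Nn; ring).
    rewrite E. assert (HX1: - (h^2/2) <= X) by (pose proof (Rabs_le_between X (h^2/2)) as [Hb _]; apply Hb in HX; lra).
    assert (h^2 <= h^2*(1+m^2)^2) by nra.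
    assert (0 <= t^4) by (replace (t^4) with ((t^2)^2) by ring; apply pow_le; nra). nra. }
  set (Y := 1 + K h t m * m) in *. set (Q := (1+R0)*(h^2+R0)) in *.
  assert (HQp: 0 < Q) by (unfold Q; nra).
  assert (0 < Y) by nra.
  assert (h^2/2 <= Q*Y) by nra.
  replace (h ^ 2 / (2 * (1 + R0) * (h ^ 2 + R0))) with ((h^2/2) / Q) by (unfold Q; field; nra).
  apply Rle_div_l; nra.
Qed.

Lemma Pol7b h t m : 0 < h -> 0 < t -> 0 <= m -> 1 + K h t m * m + - (K h t m * t) <= 7 + 3*h^2.
Proof. intros. pose proof (Dpos h t m H) as HD.
  assert (Dn h t m * (1 + K h t m * m + - (K h t m * t)) <= Dn h t m * (7 + 3*h^2)).
  { replace (Dn h t m * (1 + K h t m * m + - (K h t m * t))) with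
      (Dn h t m + (Dn h t m * K h t m) * (m - t)) by ring. rewrite DK by auto.
    assert (E1: Dn h t m = (1 + (t^2+m^2)) * (t^2+m^2) + h^2 * (1 + (t^2+m^2))) by (unfold Dn; ring).
    assert (E2: Nn h t m = (2*t^3 - m - m^3) + h^2 * ((1+m^2)*(2*t+m))) by (unfold Nn; ring).
    assert (A1: (2*t^3 - m - m^3)*(m-t) <= 6*(1 + (t^2+m^2)) * (t^2+m^2)).
    { assert (2*t^3*m <= (t^2+m^2)^2) by nra. assert (m*t <= t^2+m^2) by nra.
      assert (m^3*t <= (t^2+m^2)^2) by nra. nra. }
    assert (A2: ((1+m^2)*(2*t+m))*(m-t) <= 3*(1 + (t^2+m^2)) * (t^2+m^2)).
    { assert ((2*t+m)*(m-t) <= m^2 + t*m) by nra. assert (0 <= m^2+t*m) by nra.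
      assert ((1+m^2)*((2*t+m)*(m-t)) <= (1+m^2)*(m^2+t*m)) by nra.
      assert (m^2+t*m <= 2*(t^2+m^2)) by nra. nra. }
    rewrite E2, E1. assert (0 <= h^2) by nra.
    assert (h^2 * (((1+m^2)*(2*t+m))*(m-t)) <= h^2 * (3*(1 + (t^2+m^2)) * (t^2+m^2))) by nra.
    assert (0 <= h^2 * (1 + (t^2+m^2))) by nra.
    assert (0 <= (1 + (t^2+m^2)) * (t^2+m^2)) by nra. nra. }
  nra. Qed.

Definition kc h R1 := h^2/(1+h^2) * R1^2 / ((1+R1)*(h^2+R1)).

Lemma kc_pos h R1 : 0 < h -> 0 < R1 -> 0 < kc h R1.
Proof. intros. unfold kc. apply Rmult_lt_0_compat. apply Rmult_lt_0_compat.
 apply Rdiv_lt_0_compat; nra. nra. apply Rinv_0_lt_compat; nra. Qed.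

Lemma Pol7a h t m R1 : 0 < h -> 0 < t -> 0 <= m -> 0 < R1 -> R1 <= t^2+m^2 ->
 (-(K h t m * t) * t - m * (1 + K h t m * m)) / t^2 <= - kc h R1 / (t+m).
Proof. intros Hh Ht Hm HR1 HR.
  pose proof (Dpos h t m Hh) as HD. set (D := Dn h t m) in *.
  set (R := t^2+m^2) in *. set (L := t+m).
  assert (HL: 0 < L) by (unfold L; lra).
  set (E := R*(m+2*t)*(t^2+h^2*m^2) + 2*h^2*R*(m+t) + h^2*m).
  assert (HE: D * (-(K h t m * t) * t - m * (1 + K h t m * m)) = - E).
  { replace (D * (-(K h t m * t) * t - m * (1 + K h t m * m))) with
      (-((D * K h t m) * R + m * D)) by (unfold R; ring).
    unfold D. rewrite DK by auto. unfold E, Nn, Dn, R. ring. }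
  set (mm := h^2/(1+h^2)).
  assert (Hmm: 0 < mm /\ mm <= 1 /\ mm <= h^2).
  { unfold mm. split. apply Rdiv_lt_0_compat; nra. split.
    apply Rle_div_l; nra. apply Rle_div_l; nra. }
  assert (Ha: mm * R^2 * L <= E).
  { assert (mm * R <= t^2+h^2*m^2) by (unfold R; nra).
    assert (L <= m + 2*t) by (unfold L; lra).
    assert (0 <= R) by (unfold R; nra).
    assert (mm*R*L <= (t^2+h^2*m^2)*(m+2*t)) by (apply Rmult_le_compat; nra).
    assert (0 <= h^2) by nra.
    assert (0 <= 2*h^2*R*(m+t) + h^2*m).
    { assert (0 <= h^2*R) by (apply Rmult_le_pos; lra). assert (0 <= h^2*m) by (apply Rmult_le_pos; lra). nra. }
    assert (R*(mm*R*L) <= R*((t^2+h^2*m^2)*(m+2*t))) by (apply Rmult_le_compat_l; lra).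
    unfold E. nra. }
  assert (Hb: D * R1^2 <= (1+R1)*(h^2+R1) * R^2).
  { unfold D, Dn. fold R.
    assert (R1^2*h^2 <= R^2*h^2) by (apply Rmult_le_compat_r; nra).
    assert (R*R1^2 <= R1*R^2) by (assert (0 <= R1*R) by nra; nra).
    assert ((1+h^2)*(R*R1^2) <= (1+h^2)*(R1*R^2)) by (apply Rmult_le_compat_l; nra).
    nra. }
  assert (Hk: kc h R1 * D * t^2 <= mm * R^3).
  { unfold kc. fold mm.
    assert (0 < (1+R1)*(h^2+R1)) by nra.
    assert (mm * R1 ^ 2 / ((1 + R1) * (h ^ 2 + R1)) * D = mm * (D*R1^2) / ((1 + R1) * (h ^ 2 + R1))) by (field; lra).
    rewrite H0.
    assert (mm * (D*R1^2) / ((1 + R1) * (h ^ 2 + R1)) <= mm * R^2).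
    { apply Rle_div_l. lra. nra. }
    assert (t^2 <= R) by (unfold R; nra).
    assert (0 <= mm * (D*R1^2) / ((1 + R1) * (h ^ 2 + R1))).
    { apply Rdiv_le_0_compat; [|lra]. apply Rmult_le_pos; [lra|]. apply Rmult_le_pos; nra. }
    assert (mm * (D*R1^2) / ((1 + R1) * (h ^ 2 + R1)) * t^2 <= mm * R^2 * R)
      by (apply Rmult_le_compat; nra).
    replace (mm * R^3) with (mm * R^2 * R) by ring. lra. }
  assert (Hc: mm * R^3 <= E * L).
  { assert (R <= L^2) by (unfold R, L; nra). assert (0 <= R) by (unfold R; nra).
    assert (0 <= mm * R^2) by (apply Rmult_le_pos; nra).
    assert (mm * R^2 * R <= mm * R^2 * L^2) by (apply Rmult_le_compat_l; lra).
    assert (mm * R^2 * L * L <= E * L) by (apply Rmult_le_compat_r; lra).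
    replace (mm * R^3) with (mm * R^2 * R) by ring. nra. }
  assert (Ht2: 0 < t^2) by nra.
  replace ((-(K h t m * t) * t - m * (1 + K h t m * m)) / t^2) with (- E / (D * t^2)).
  2:{ rewrite <- HE. field. split; lra. }
  assert (kc h R1 / L <= E / (D * t^2)).
  { assert (0 < D * t^2) by nra.
    assert (E / (D * t^2) - kc h R1 / L = (E * L - kc h R1 * D * t^2) / (L * (D * t^2))) by (field; lra).
    assert (0 <= (E * L - kc h R1 * D * t^2) / (L * (D * t^2))) by (apply Rdiv_le_0_compat; nra).
    lra. }
  unfold L in H.
  assert (- E / (D*t^2) = -(E/(D*t^2))) by (field; lra).
  assert (- kc h R1 / (t+m) = -(kc h R1/(t+m))) by (field; intro; lra). change (t+m) with L in H, H1. lra. Qed.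

Lemma mono_le (f df : R -> R) a b : a <= b ->
  (forall x, a <= x <= b -> is_derive f x (df x)) ->
  (forall x, a <= x <= b -> df x <= 0) -> f b <= f a.
Proof. intros Hab Hd Hs. destruct (Req_dec a b) as [->|Hne]; [lra|].
  destruct (MVT_cor3 f df a b) as [c [H1 [H2 H3]]]; [lra| |].
  - intros x Hx1 Hx2. apply is_derive_Reals. apply Hd; lra.
  - rewrite H3. assert (df c <= 0) by (apply Hs; lra). nra. Qed.

Lemma dlim_bound f x l : derivable_pt_lim f x l ->
  exists d, 0 < d /\ forall u, Rabs u < d -> Rabs (f (x+u) - f x) <= Rabs u * (Rabs l + 1).
Proof. intros H. destruct (H 1 Rlt_0_1) as [d Hd]. exists d. split; [apply cond_pos|].
  intros u Hu. destruct (Req_dec u 0) as [->|Hu0].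
  - rewrite Rplus_0_r, Rminus_diag, !Rabs_R0. lra.
  - specialize (Hd u Hu0 Hu).
    assert (E: f (x+u) - f x = u * ((f (x+u) - f x)/u)) by (field; auto).
    rewrite E, Rabs_mult. apply Rmult_le_compat_l; [apply Rabs_pos|].
    pose proof (Rabs_triang_inv ((f (x + u) - f x) / u) l). lra. Qed.

Lemma dlim_sign f x l : derivable_pt_lim f x l -> 0 < l ->
  exists d, 0 < d /\ forall u, 0 < u < d -> f (x - u) < f x.
Proof. intros H Hl. destruct (H (l/2) ltac:(lra)) as [d Hd]. exists d. split; [apply cond_pos|].
  intros u [Hu1 Hu2]. assert (Hn: -u <> 0) by lra. assert (Ha: Rabs (-u) < d) by (rewrite Rabs_Ropp, Rabs_pos_eq; lra).
  specialize (Hd (-u) Hn Ha). apply Rabs_def2 in Hd. destruct Hd as [Hd1 Hd2].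
  replace (x + - u) with (x - u) in * by ring.
  assert (0 < (f (x - u) - f x) / (- u)) by lra.
  assert (E: f (x-u) - f x = (-u) * ((f (x - u) - f x) / (- u))) by (field; lra).
  nra. Qed.

Lemma barrier (f df : R -> R) a b c : a <= b ->
  (forall x, a <= x <= b -> is_derive f x (df x)) -> c < f a ->
  (forall x, a <= x <= b -> f x = c -> 0 < df x) -> c < f b.
Proof. intros Hab Hd Hfa Hc. destruct (Rlt_or_le c (f b)) as [|Hfb]; [auto|exfalso].
  set (E := fun t => a <= t <= b /\ forall u, a <= u <= t -> c < f u).
  assert (HE: bound E) by (exists b; intros t [Ht _]; lra).
  assert (Ha: E a) by (split; [lra| intros u Hu; replace u with a by lra; auto]).
  destruct (completeness E HE (ex_intro _ a Ha)) as [m [Hub Hlub]].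
  assert (Ham: a <= m) by (apply Hub; auto).
  assert (Hmb: m <= b) by (apply Hlub; intros t [Ht _]; lra).
  assert (Hbel: forall u, a <= u < m -> c < f u).
  { intros u Hu. destruct (Rle_or_lt m u) as [|Hlt]; [lra|].
    apply NNPP. intro Hn.
    assert (m <= u); [|lra]. apply Hlub. intros t [Ht Ht2].
    destruct (Rle_or_lt t u) as [|Htu]; [auto|]. exfalso. apply Hn. apply Ht2. lra. }
  assert (Hdm: derivable_pt_lim f m (df m)) by (apply is_derive_Reals, Hd; lra).
  destruct (dlim_bound f m (df m) Hdm) as [d1 [Hd1 Hb1]].
  set (Lm := Rabs (df m) + 1). assert (HLm: 0 < Lm) by (unfold Lm; pose proof (Rabs_pos (df m)); lra).
  destruct (Rtotal_order (f m) c) as [Hlt|[Heq|Hgt]].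
  -
    assert (Ham2: a < m). { destruct (Req_dec a m) as [<-|]; [lra|lra]. }
    set (e := Rmin (Rmin (d1/2) (m - a)) ((c - f m) / (2*Lm))).
    assert (He: 0 < e). { unfold e. apply Rmin_pos; [apply Rmin_pos|]; try lra. apply Rdiv_lt_0_compat; lra. }
    assert (He1: e <= d1/2) by (unfold e; eapply Rle_trans; [apply Rmin_l|apply Rmin_l]).
    assert (He2: e <= m - a) by (unfold e; eapply Rle_trans; [apply Rmin_l|apply Rmin_r]).
    assert (He3: e <= (c - f m) / (2*Lm)) by (unfold e; apply Rmin_r).
    assert (c < f (m - e)) by (apply Hbel; lra).
    assert (Rabs (-e) < d1) by (rewrite Rabs_Ropp, Rabs_pos_eq; lra).
    specialize (Hb1 (-e) H0). replace (m + - e) with (m - e) in Hb1 by ring.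
    rewrite Rabs_Ropp, (Rabs_pos_eq e) in Hb1 by lra. fold Lm in Hb1.
    assert (e * Lm <= (c - f m)/2).
    { apply Rmult_le_compat_r with (r := Lm) in He3; [|lra].
      replace ((c - f m) / (2 * Lm) * Lm) with ((c - f m)/2) in He3 by (field; lra). lra. }
    apply Rabs_le_between in Hb1. lra.
  -
    assert (Ham2: a < m). { destruct (Req_dec a m) as [<-|]; [lra|lra]. }
    assert (Hp: 0 < df m) by (apply Hc; lra).
    destruct (dlim_sign f m (df m) Hdm Hp) as [d2 [Hd2 Hs]].
    set (e := Rmin (d2/2) (m - a)).
    assert (He: 0 < e) by (unfold e; apply Rmin_pos; lra).
    assert (e <= d2/2) by apply Rmin_l. assert (e <= m - a) by apply Rmin_r.
    assert (c < f (m - e)) by (apply Hbel; lra).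
    assert (f (m - e) < f m) by (apply Hs; lra). lra.
  -
    assert (Hmb2: m < b). { destruct (Req_dec m b) as [->|]; [lra|lra]. }
    set (e := Rmin (Rmin (d1/2) (b - m)) ((f m - c) / (2*Lm))).
    assert (He: 0 < e). { unfold e. apply Rmin_pos; [apply Rmin_pos|]; try lra. apply Rdiv_lt_0_compat; lra. }
    assert (He1: e <= d1/2) by (unfold e; eapply Rle_trans; [apply Rmin_l|apply Rmin_l]).
    assert (He2: e <= b - m) by (unfold e; eapply Rle_trans; [apply Rmin_l|apply Rmin_r]).
    assert (He3: e <= (f m - c) / (2*Lm)) by (unfold e; apply Rmin_r).
    assert (Hel: e * Lm <= (f m - c)/2).
    { apply Rmult_le_compat_r with (r := Lm) in He3; [|lra].
      replace ((f m - c) / (2 * Lm) * Lm) with ((f m - c)/2) in He3 by (field; lra). lra. }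
    assert (E (m + e)).
    { split; [lra|]. intros u Hu. destruct (Rlt_or_le u m) as [|Hum]; [apply Hbel; lra|].
      assert (Hud: Rabs (u - m) < d1) by (rewrite Rabs_pos_eq; lra).
      specialize (Hb1 (u - m) Hud). replace (m + (u - m)) with u in Hb1 by ring.
      rewrite (Rabs_pos_eq (u - m)) in Hb1 by lra. fold Lm in Hb1.
      assert ((u - m) * Lm <= e * Lm) by (apply Rmult_le_compat_r; lra).
      apply Rabs_le_between in Hb1. lra. }
    assert (m + e <= m) by (apply Hub; auto). lra.
Qed.

Lemma is_derive_val (f : R -> R) (x l l' : R) : is_derive f x l -> l = l' -> is_derive f x l'.
Proof. intros H <-. exact H. Qed.

Lemma d_lin (f g : R -> R) a b x df dg : is_derive f x df -> is_derive g x dg ->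
  is_derive (fun s => a * f s + b * g s) x (a * df + b * dg).
Proof. intros. apply (is_derive_plus (fun s => a * f s) (fun s => b * g s));
  apply is_derive_scal; auto. Qed.

Lemma d_lin_s (f : R -> R) a x df : is_derive f x df ->
  is_derive (fun s => f s + a * s) x (df + a).
Proof. intros. apply (is_derive_plus f (fun s => a * s)). auto.
  apply is_derive_val with (a * 1). apply (is_derive_scal (fun s => s)). apply (is_derive_id x). apply Rmult_1_r. Qed.

Lemma d_sq2 (f g : R -> R) x df dg : is_derive f x df -> is_derive g x dg ->
  is_derive (fun s => f s ^ 2 + g s ^ 2) x (2 * f x * df + 2 * g x * dg).
Proof. intros. apply (is_derive_plus (fun s => f s ^ 2) (fun s => g s ^ 2)).
  - eapply is_derive_val. apply (is_derive_pow f 2 x df H). simpl. ring.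
  - eapply is_derive_val. apply (is_derive_pow g 2 x dg H0). simpl. ring. Qed.

Lemma d_ln (f : R -> R) x df : 0 < f x -> is_derive f x df ->
  is_derive (fun s => ln (f s)) x (df / f x).
Proof. intros. eapply is_derive_val. apply (is_derive_comp ln f x (/ f x) df).
  apply is_derive_ln; auto. auto. simpl. unfold scal; simpl. unfold mult; simpl. unfold Rdiv. ring. Qed.

Lemma mono_ge (f df : R -> R) a b : a <= b ->
  (forall x, a <= x <= b -> is_derive f x (df x)) ->
  (forall x, a <= x <= b -> 0 <= df x) -> f a <= f b.
Proof. intros Hab Hd Hs.
  assert (H := mono_le (fun s => - f s) (fun s => - df s) a b Hab).
  cbv beta in H. cut (- f b <= - f a); [lra|]. apply H.
  - intros x Hx. apply (is_derive_opp f x (df x)). auto.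
  - intros x Hx. specialize (Hs x Hx). lra. Qed.

Lemma exp_le_mono x y : x <= y -> exp x <= exp y.
Proof. intros [H|H]; [left; apply exp_increasing; auto|rewrite H; lra]. Qed.

Lemma dRsq (h : R) (tau mu : R -> R) (s : R) :
  is_derive tau s (1 + K h (tau s) (mu s) * mu s) ->
  is_derive mu s (- (K h (tau s) (mu s) * tau s)) ->
  is_derive (fun s => tau s ^ 2 + mu s ^ 2) s (2 * tau s).
Proof. intros. eapply is_derive_val. apply d_sq2; eauto. ring. Qed.

Lemma step1 (h : R) (tau mu : R -> R) : 0 < h ->
  (forall s, is_derive tau s (1 + K h (tau s) (mu s) * mu s)) ->
  (forall s, is_derive mu s (- (K h (tau s) (mu s) * tau s))) ->
  exists s1, 0 < tau s1.
Proof. intros Hh Ht Hm. apply NNPP. intro Hn.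
  assert (Hle: forall s, tau s <= 0).
  { intro s. destruct (Rlt_or_le 0 (tau s)); [exfalso; apply Hn; eauto|auto]. }
  set (R0 := tau 0 ^ 2 + mu 0 ^ 2).
  assert (HR: forall s, 0 <= s -> tau s ^ 2 + mu s ^ 2 <= R0).
  { intros s Hs. apply (mono_le (fun s => tau s ^ 2 + mu s ^ 2) (fun s => 2 * tau s) 0 s Hs).
    - intros x _. apply (dRsq h); auto.
    - intros x _. specialize (Hle x). lra. }
  assert (HR0: 0 <= R0) by (unfold R0; nra).
  set (d := Rmin 1 (h^2 / (4 * (1+h^2) * (1+R0)^2))).
  assert (Hd: 0 < d).
  { unfold d. apply Rmin_pos; [lra|]. apply Rdiv_lt_0_compat; [nra|].
    apply Rmult_lt_0_compat; nra. }
  set (c := h^2 / (2 * (1+R0) * (h^2+R0))).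
  assert (Hc: 0 < c) by (unfold c; apply Rdiv_lt_0_compat; nra).
  assert (Hbd: forall s, 0 <= s -> -d <= tau s -> c <= 1 + K h (tau s) (mu s) * mu s).
  { intros s Hs Hs2. apply Pol6; auto. }
  destruct (classic (exists s', 0 <= s' /\ -d < tau s')) as [[s' [Hs'1 Hs'2]]|Hno].
  - assert (Hkeep: forall s, s' <= s -> -d < tau s).
    { intros s Hs. apply (barrier tau (fun x => 1 + K h (tau x) (mu x) * mu x) s' s); auto.
      intros x Hx Hx2. assert (c <= 1 + K h (tau x) (mu x) * mu x) by (apply Hbd; lra). lra. }
    set (s := s' + (1 - tau s') / c).
    assert (Hss: s' <= s). { unfold s. assert (0 <= (1 - tau s')/c). apply Rdiv_le_0_compat; [specialize (Hle s'); lra|lra]. lra. }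
    assert (Hmon: (fun s => - tau s + c * s) s <= (fun s => - tau s + c * s) s').
    { apply (mono_le (fun s => - tau s + c * s) (fun x => - (1 + K h (tau x) (mu x) * mu x) + c) s' s Hss).
      - intros x _. apply d_lin_s. apply (is_derive_opp tau x). auto.
      - intros x Hx. assert (c <= 1 + K h (tau x) (mu x) * mu x).
        { apply Hbd; [lra|]. specialize (Hkeep x ltac:(lra)). lra. } lra. }
    cbv beta in Hmon. specialize (Hle s).
    assert (c * (s - s') = 1 - tau s') by (unfold s; field; intro; lra). nra.
  - assert (Hall: forall s, 0 <= s -> tau s <= -d).
    { intros s Hs. destruct (Rle_or_lt (tau s) (-d)); auto. exfalso. apply Hno; eauto. }
    set (s := R0 / d + 1).
    assert (Hs0: 0 <= s) by (unfold s; assert (0 <= R0/d) by (apply Rdiv_le_0_compat; lra); lra).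
    assert (Hmon: (fun s => (tau s ^ 2 + mu s ^ 2) + (2*d) * s) s <= (fun s => (tau s ^ 2 + mu s ^ 2) + (2*d) * s) 0).
    { apply (mono_le (fun s => (tau s ^ 2 + mu s ^ 2) + (2*d) * s) (fun x => 2 * tau x + 2 * d) 0 s Hs0).
      - intros x _. apply d_lin_s. apply (dRsq h); auto.
      - intros x Hx. specialize (Hall x ltac:(lra)). lra. }
    cbv beta in Hmon. fold R0 in Hmon.
    assert (0 <= tau s ^ 2 + mu s ^ 2) by nra.
    assert (d * s = R0 + d) by (unfold s; field; intro; lra). lra.
Qed.

Lemma tau_inv (h : R) (tau mu : R -> R) : 0 < h ->
  (forall s, is_derive tau s (1 + K h (tau s) (mu s) * mu s)) ->
  forall s1, 0 < tau s1 -> forall s, s1 <= s -> 0 < tau s.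
Proof. intros Hh Ht s1 H1 s Hs.
  apply (barrier tau (fun x => 1 + K h (tau x) (mu x) * mu x) s1 s 0); auto.
  intros x _ Hx. rewrite Hx. apply Pol1; auto. Qed.

Lemma step2 (h : R) (tau mu : R -> R) : 0 < h ->
  (forall s, is_derive tau s (1 + K h (tau s) (mu s) * mu s)) ->
  (forall s, is_derive mu s (- (K h (tau s) (mu s) * tau s))) ->
  forall s1, 0 < tau s1 -> exists s2, s1 <= s2 /\ mu s2 < 0.
Proof. intros Hh Ht Hm s1 Hs1.
  pose proof (tau_inv h tau mu Hh Ht s1 Hs1) as Hp.
  apply NNPP. intro Hn.
  assert (Hmu: forall s, s1 <= s -> 0 <= mu s).
  { intros s Hs. destruct (Rlt_or_le (mu s) 0); [exfalso; apply Hn; eauto|auto]. }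
  set (R1 := tau s1 ^ 2 + mu s1 ^ 2).
  assert (HR1p: 0 < R1) by (unfold R1; nra).
  assert (HR1: forall s, s1 <= s -> R1 <= tau s ^ 2 + mu s ^ 2).
  { intros s Hs. apply (mono_ge (fun s => tau s ^ 2 + mu s ^ 2) (fun s => 2 * tau s) s1 s Hs).
    - intros x _. apply (dRsq h); auto.
    - intros x Hx. specialize (Hp x ltac:(lra)). lra. }
  set (k := kc h R1). assert (Hk: 0 < k) by (apply kc_pos; auto).
  set (B := 7 + 3*h^2). assert (HB: 0 < B) by (unfold B; nra).
  set (phid := fun x => (-(K h (tau x) (mu x) * tau x) * tau x - mu x * (1 + K h (tau x) (mu x) * mu x)) / tau x ^ 2).
  assert (Hphi: forall x, s1 <= x -> is_derive (fun s => mu s / tau s) x (phid x)).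
  { intros x Hx. apply is_derive_div; auto. specialize (Hp x Hx). lra. }
  assert (Hphid: forall x, s1 <= x -> phid x <= - k / (tau x + mu x)).
  { intros x Hx. apply Pol7a; auto. }
  set (L := fun s => 1 * tau s + 1 * mu s).
  set (Ld := fun x => 1 * (1 + K h (tau x) (mu x) * mu x) + 1 * (- (K h (tau x) (mu x) * tau x))).
  assert (HL: forall x, is_derive L x (Ld x)) by (intro x; apply d_lin; auto).
  assert (HLp: forall x, s1 <= x -> 0 < L x) by (intros x Hx; unfold L; specialize (Hp x Hx); specialize (Hmu x Hx); lra).
  assert (HLd: forall x, s1 <= x -> Ld x <= B).
  { intros x Hx. unfold Ld, B. rewrite !Rmult_1_l. apply Pol7b; auto. }
  set (psi := fun s => 1 * (mu s / tau s) + (k/B) * ln (L s)).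
  set (psid := fun x => 1 * phid x + (k/B) * (Ld x / L x)).
  assert (Hpsi: forall s, s1 <= s -> psi s <= psi s1).
  { intros s Hs. apply (mono_le psi psid s1 s Hs).
    - intros x Hx. apply d_lin. apply Hphi; lra. apply d_ln. apply HLp; lra. auto.
    - intros x Hx. unfold psid. specialize (Hphid x ltac:(lra)). specialize (HLd x ltac:(lra)).
      specialize (HLp x ltac:(lra)).
      assert (Ld x / L x <= B / L x) by (apply Rmult_le_compat_r; [left; apply Rinv_0_lt_compat|]; lra).
      assert ((k/B) * (Ld x / L x) <= (k/B) * (B / L x)).
      { apply Rmult_le_compat_l; [|auto]. left; apply Rdiv_lt_0_compat; lra. }
      assert ((k/B) * (B / L x) = k / (tau x + mu x)) by (unfold L; unfold L in HLp; field; repeat split; intro; lra).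
      assert (- k / (tau x + mu x) = - (k / (tau x + mu x))) by (field; unfold L in HLp; intro; lra).
      lra. }
  set (Lam := psi s1 * B / k). set (Lm := exp Lam).
  assert (HLm: forall s, s1 <= s -> L s <= Lm).
  { intros s Hs. specialize (Hpsi s Hs). unfold psi in Hpsi.
    assert (0 <= mu s / tau s) by (apply Rdiv_le_0_compat; [apply Hmu|apply Hp]; lra).
    assert ((k/B) * ln (L s) <= psi s1) by (unfold psi; lra).
    assert (ln (L s) <= Lam).
    { unfold Lam. assert (ln (L s) = ((k/B) * ln (L s)) * B / k) by (field; lra). rewrite H1.
      apply Rmult_le_compat_r; [left; apply Rinv_0_lt_compat; lra|].
      apply Rmult_le_compat_r; lra. }
    rewrite <- (exp_ln (L s)) by (apply HLp; auto). apply exp_le_mono; auto. }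
  assert (HLmp: 0 < Lm) by apply exp_pos.
  set (kap := k / Lm). assert (Hkap: 0 < kap) by (apply Rdiv_lt_0_compat; lra).
  set (s := s1 + (mu s1 / tau s1) / kap + 1).
  assert (Hs: s1 <= s).
  { unfold s. assert (0 <= mu s1 / tau s1) by (apply Rdiv_le_0_compat; [apply Hmu|]; lra).
    assert (0 <= (mu s1 / tau s1) / kap) by (apply Rdiv_le_0_compat; lra). lra. }
  assert (Hmon: (fun s => mu s / tau s + kap * s) s <= (fun s => mu s / tau s + kap * s) s1).
  { apply (mono_le (fun s => mu s / tau s + kap * s) (fun x => phid x + kap) s1 s Hs).
    - intros x Hx. apply d_lin_s. apply Hphi; lra.
    - intros x Hx. specialize (Hphid x ltac:(lra)). specialize (HLm x ltac:(lra)).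
      specialize (HLp x ltac:(lra)). unfold L in HLm, HLp.
      assert (kap <= k / (tau x + mu x)).
      { unfold kap. apply Rmult_le_compat_l; [lra|]. apply Rinv_le_contravar; lra. }
      assert (- k / (tau x + mu x) = - (k / (tau x + mu x))) by (field; lra). lra. }
  cbv beta in Hmon.
  assert (0 <= mu s / tau s) by (apply Rdiv_le_0_compat; [apply Hmu|apply Hp]; lra).
  assert (kap * (s - s1) = mu s1 / tau s1 + kap) by (unfold s; field; lra).
  nra.
Qed.

Lemma forward (h : R) (tau mu : R -> R) : 0 < h ->
  (forall s, is_derive tau s (1 + K h (tau s) (mu s) * mu s)) ->
  (forall s, is_derive mu s (- (K h (tau s) (mu s) * tau s))) ->
  (forall T, exists S, forall s, S <= s -> T <= tau s) /\
  (forall T, exists S, forall s, S <= s -> mu s <= - T).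
Proof. intros Hh Ht Hm.
  destruct (step1 h tau mu Hh Ht Hm) as [s1 Hs1].
  pose proof (tau_inv h tau mu Hh Ht s1 Hs1) as Hp.
  destruct (step2 h tau mu Hh Ht Hm s1 Hs1) as [s2 [Hs12 Hs2]].
  assert (Hneg: forall s, s2 <= s -> mu s < 0).
  { intros s Hs. assert (0 < - mu s); [|lra].
    apply (barrier (fun s => - mu s) (fun x => K h (tau x) (mu x) * tau x) s2 s 0 Hs).
    - intros x _. eapply is_derive_val. apply (is_derive_opp mu x). apply Hm. simpl. unfold opp; simpl. ring.
    - lra.
    - intros x Hx Hx2. assert (mu x = 0) by lra. rewrite H. apply Pol2; auto. apply Hp; lra. }
  set (M := Rmax 2 (- mu s2 / tau s2) + 1).
  assert (HM2: 2 <= M) by (unfold M; pose proof (Rmax_l 2 (- mu s2 / tau s2)); lra).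
  assert (HMb: forall s, s2 <= s -> - (M * tau s) < mu s).
  { intros s Hs. assert (0 < 1 * mu s + M * tau s); [|lra].
    apply (barrier (fun s => 1 * mu s + M * tau s)
       (fun x => 1 * (- (K h (tau x) (mu x) * tau x)) + M * (1 + K h (tau x) (mu x) * mu x)) s2 s 0 Hs).
    - intros x _. apply d_lin; auto.
    - assert (Ht2: 0 < tau s2) by (apply Hp; lra).
      assert (- mu s2 / tau s2 < M) by (unfold M; pose proof (Rmax_r 2 (- mu s2 / tau s2)); lra).
      assert (- mu s2 < M * tau s2).
      { apply Rmult_lt_compat_r with (r := tau s2) in H; [|lra].
        replace (- mu s2 / tau s2 * tau s2) with (- mu s2) in H by (field; lra). lra. }
      lra.
    - intros x Hx Hx2. assert (E: mu x = - (M * tau x)) by lra.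
      pose proof (Pol3 h (tau x) M Hh ltac:(apply Hp; lra) HM2) as P3.
      rewrite <- E in P3. lra. }
  set (R2 := tau s2 ^ 2 + mu s2 ^ 2).
  assert (HR2p: 0 < R2) by (unfold R2; pose proof (Hp s2 Hs12); nra).
  assert (Hsq: forall s, s2 <= s -> tau s ^ 2 + mu s ^ 2 <= (1 + M^2) * tau s ^ 2).
  { intros s Hs. pose proof (HMb s Hs). pose proof (Hneg s Hs). pose proof (Hp s ltac:(lra)).
    assert (mu s ^ 2 <= M^2 * tau s ^ 2) by nra. lra. }
  set (d2 := sqrt (R2 / (1 + M^2))).
  assert (Hd2: 0 < d2) by (apply sqrt_lt_R0, Rdiv_lt_0_compat; nra).
  assert (Hd2sq: d2 ^ 2 = R2 / (1 + M^2)) by (unfold d2; rewrite <- Rsqr_pow2; apply Rsqr_sqrt; apply Rlt_le, Rdiv_lt_0_compat; nra).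
  assert (HRg: forall s, s2 <= s -> R2 <= tau s ^ 2 + mu s ^ 2).
  { intros s Hs. apply (mono_ge (fun s => tau s ^ 2 + mu s ^ 2) (fun s => 2 * tau s) s2 s Hs).
    - intros x _. apply (dRsq h); auto.
    - intros x Hx. specialize (Hp x ltac:(lra)). lra. }
  assert (Htd: forall s, s2 <= s -> d2 <= tau s).
  { intros s Hs. pose proof (HRg s Hs). pose proof (Hsq s Hs). pose proof (Hp s ltac:(lra)).
    assert (d2 ^ 2 <= tau s ^ 2).
    { rewrite Hd2sq. apply Rle_div_l; nra. }
    nra. }
  assert (HRlin: forall s, s2 <= s -> R2 + 2 * d2 * (s - s2) <= tau s ^ 2 + mu s ^ 2).
  { intros s Hs.
    assert (H := mono_ge (fun s => tau s ^ 2 + mu s ^ 2 + (- (2 * d2)) * s) (fun x => 2 * tau x + - (2*d2)) s2 s Hs).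
    cbv beta in H. fold R2 in H. cut (R2 + - (2 * d2) * s2 <= tau s ^ 2 + mu s ^ 2 + - (2 * d2) * s); [lra|].
    apply H.
    - intros x _. apply d_lin_s. apply (dRsq h); auto.
    - intros x Hx. specialize (Htd x ltac:(lra)). lra. }
  assert (Htau: forall T, exists S, forall s, S <= s -> T <= tau s).
  { intro T. set (T' := Rmax T 0).
    exists (s2 + T'^2 * (1 + M^2) / (2 * d2)). intros s Hs.
    assert (HT': 0 <= T') by apply Rmax_r.
    assert (0 <= T'^2 * (1 + M^2) / (2 * d2)) by (apply Rdiv_le_0_compat; nra).
    pose proof (HRlin s ltac:(lra)). pose proof (Hsq s ltac:(lra)). pose proof (Hp s ltac:(lra)).
    assert (2 * d2 * (s - s2) >= T'^2 * (1+M^2)).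
    { assert (2 * d2 * (T'^2 * (1 + M^2) / (2 * d2)) = T'^2 * (1+M^2)) by (field; lra). nra. }
    assert (T'^2 <= tau s ^ 2) by nra.
    assert (T' <= tau s).
    { destruct (Rle_or_lt T' (tau s)) as [Hle|Hlt]; [exact Hle|]. exfalso.
      assert (tau s * tau s < T' * T') by (apply Rmult_le_0_lt_compat; lra).
      assert (T'^2 = T' * T') by ring. assert (tau s ^ 2 = tau s * tau s) by ring. lra. }
    pose proof (Rmax_l T 0). unfold T' in *. lra. }
  split; [exact Htau|].
  destruct (Htau 2) as [S3 HS3].
  set (s3 := Rmax S3 s2).
  assert (Hs3: S3 <= s3 /\ s2 <= s3) by (split; [apply Rmax_l|apply Rmax_r]).
  set (Qd := fun x => 1 * (- (K h (tau x) (mu x) * tau x)) + 1 * (1 + K h (tau x) (mu x) * mu x)).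
  assert (HQd: forall x, s3 <= x -> - tau x <= mu x -> Qd x <= -1/5).
  { intros x Hx Hx2. unfold Qd.
    pose proof (Pol5 h (tau x) (mu x) Hh ltac:(apply HS3; lra) Hx2 ltac:(pose proof (Hneg x ltac:(lra)); lra)).
    replace (1 * - (K h (tau x) (mu x) * tau x) + 1 * (1 + K h (tau x) (mu x) * mu x))
      with (1 + K h (tau x) (mu x) * (mu x - tau x)) by ring. auto. }
  assert (HQ: forall x, is_derive (fun s => 1 * mu s + 1 * tau s) x (Qd x)) by (intro x; apply d_lin; auto).
  assert (Hex: exists s4, s3 <= s4 /\ mu s4 + tau s4 < 0).
  { apply NNPP. intro Hn.
    assert (Hge: forall s, s3 <= s -> - tau s <= mu s).
    { intros s Hs. destruct (Rlt_or_le (mu s + tau s) 0); [exfalso; apply Hn; eauto|lra]. }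
    set (s := s3 + 5 * (mu s3 + tau s3) + 1).
    assert (Hs: s3 <= s) by (unfold s; pose proof (Hge s3 ltac:(lra)); lra).
    assert (H := mono_le (fun s => (1 * mu s + 1 * tau s) + (1/5) * s) (fun x => Qd x + 1/5) s3 s Hs).
    cbv beta in H.
    assert (1 * mu s + 1 * tau s + 1 / 5 * s <= 1 * mu s3 + 1 * tau s3 + 1 / 5 * s3).
    { apply H. intros x _. apply d_lin_s. auto. intros x Hx. specialize (HQd x ltac:(lra) (Hge x ltac:(lra))). lra. }
    pose proof (Hge s Hs). assert (1/5*s = 1/5*s3 + (mu s3 + tau s3) + 1/5) by (unfold s; field). lra. }
  destruct Hex as [s4 [Hs4 Hs4b]].
  assert (Hfin: forall s, s4 <= s -> mu s < - tau s).
  { intros s Hs. assert (0 < - (1 * mu s + 1 * tau s)); [|lra].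
    apply (barrier (fun s => - (1 * mu s + 1 * tau s)) (fun x => - Qd x) s4 s 0 Hs).
    - intros x _. apply (is_derive_opp (fun s => 1 * mu s + 1 * tau s) x (Qd x)). auto.
    - lra.
    - intros x Hx Hx2. assert (- tau x <= mu x) by lra. specialize (HQd x ltac:(lra) H). lra. }
  intro T. destruct (Htau T) as [S HS]. exists (Rmax S s4). intros s Hs.
  pose proof (Rmax_l S s4). pose proof (Rmax_r S s4).
  specialize (HS s ltac:(lra)). specialize (Hfin s ltac:(lra)). lra.
Qed.

Lemma K_odd h a b : 0 < h -> K h (-a) (-b) = - K h a b.
Proof. intros. rewrite !K_eq. unfold Nn, Dn.
  pose proof (Dpos h a b H) as HD. unfold Dn in HD.
  field. split; nra. Qed.

Lemma d_refl (f : R -> R) (s df : R) : is_derive f (-s) df -> is_derive (fun s => - f (- s)) s df.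
Proof. intros H. eapply is_derive_val.
  apply (is_derive_opp (fun s => f (- s)) s).
  apply (is_derive_comp f (fun s => - s) s df (-1)). exact H.
  eapply is_derive_val. apply (is_derive_opp (fun s => s) s 1). apply (is_derive_id (K := R_AbsRing)). reflexivity.
  simpl. unfold opp, scal; simpl. unfold mult, opp; simpl. ring. Qed.

Theorem claim6 (h : R) (tau mu : R -> R) :
  0 < h ->
  (forall s, is_derive tau s (1 + K h (tau s) (mu s) * mu s)) ->
  (forall s, is_derive mu s (- (K h (tau s) (mu s) * tau s))) ->
  is_lim tau p_infty p_infty /\ is_lim tau m_infty m_infty /\
  is_lim mu p_infty m_infty /\ is_lim mu m_infty p_infty.
Proof. intros Hh Ht Hm.
  destruct (forward h tau mu Hh Ht Hm) as [F1 F2].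
  set (tau2 := fun s => - tau (- s)). set (mu2 := fun s => - mu (- s)).
  assert (Ht2: forall s, is_derive tau2 s (1 + K h (tau2 s) (mu2 s) * mu2 s)).
  { intro s. unfold tau2, mu2. eapply is_derive_val. apply d_refl. apply Ht.
    rewrite K_odd by auto. ring. }
  assert (Hm2: forall s, is_derive mu2 s (- (K h (tau2 s) (mu2 s) * tau2 s))).
  { intro s. unfold tau2, mu2. eapply is_derive_val. apply d_refl. apply Hm.
    rewrite K_odd by auto. ring. }
  destruct (forward h tau2 mu2 Hh Ht2 Hm2) as [G1 G2].
  split; [|split; [|split]]; apply is_lim_spec; simpl.
  - intro M. destruct (F1 (M+1)) as [S HS]. exists S. intros x Hx. specialize (HS x ltac:(lra)). lra.
  - intro M. destruct (G1 (-M+1)) as [S HS]. exists (-S). intros x Hx.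
    specialize (HS (-x) ltac:(lra)). unfold tau2 in HS. rewrite Ropp_involutive in HS. lra.
  - intro M. destruct (F2 (-M+1)) as [S HS]. exists S. intros x Hx. specialize (HS x ltac:(lra)). lra.
  - intro M. destruct (G2 (M+1)) as [S HS]. exists (-S). intros x Hx.
    specialize (HS (-x) ltac:(lra)). unfold mu2 in HS. rewrite Ropp_involutive in HS. lra.
Qed.
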